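(* Let $P$ be the uniform distribution on $[0,1]$ and $\beta=\{\frac14,\frac12\}$. The conditional optimal set of three-points for $P$ with respect to $\beta$ is $\alpha_3=\{\frac14,\frac12,\frac56\}$, with $V_3=\frac{77}{6912}$ ($\approx0.01114$).
   Context: For a Borel probability measure $P$ on $\mathbb{R}$ and finite $\beta$ with $\mathrm{card}(\beta)=r$, for $n\ge r$, $V_n=\inf\{\int\min_{a\in\alpha\cup\beta}(x-a)^2dP(x):\mathrm{card}(\alpha)\le n-r\}$; a set $\alpha\cup\beta$ attaining the infimum, with each point of $\beta$ having a Voronoi region of positive $P$-measure, is a conditional optimal set of $n$-points with respect to $\beta$. *)

(* Defs.v *)
From HB Require Import structures.
From mathcomp Require Import all_boot all_order all_algebra finmap.
From mathcomp Require Import all_classical all_reals all_analysis.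
Set Implicit Arguments. Unset Strict Implicit. Unset Printing Implicit Defensive.
Import Order.TTheory GRing.Theory Num.Theory.
Local Open Scope classical_set_scope.
Local Open Scope fset_scope.
Local Open Scope ring_scope.

Section CondQuant.
Variables (R : realType) (P : probability (measurableTypeR R) R).

Definition sqdist (S : {fset R}) (x : R) : \bar R :=
  \big[Order.min/+oo%E]_(a <- S) ((x - a) ^+ 2)%:E.

Definition distortion (S : {fset R}) : \bar R :=
  (\int[P]_x sqdist S x)%E.

Definition condV (beta : {fset R}) (n : nat) : \bar R :=
  ereal_inf [set distortion (alpha `|` beta) | alpha in
               [set alpha : {fset R} | (#|` alpha| <= n - #|` beta|)%N]].

Definition voronoi (S : {fset R}) (b : R) : set R :=
  [set x | forall a, a \in S -> `|x - b| <= `|x - a|].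

Definition cond_optimal (beta : {fset R}) (n : nat) (S : {fset R}) : Prop :=
  (#|` beta| <= n)%N /\
  exists alpha : {fset R}, [/\ (#|` alpha| <= n - #|` beta|)%N,
    S = alpha `|` beta,
    distortion S = condV beta n &
    forall b, b \in beta -> (0 < P (voronoi S b))%E].

End CondQuant.

(* Main.v *)
Require Import Defs.
From HB Require Import structures.
From mathcomp Require Import all_boot all_order all_algebra finmap.
From mathcomp Require Import all_classical all_reals all_analysis.
From mathcomp Require Import measurable_realfun ring lra.
Import Order.TTheory GRing.Theory Num.Theory.
Import numFieldNormedType.Exports.
Local Open Scope classical_set_scope.
Local Open Scope fset_scope.
Local Open Scope ring_scope.
Section S.
Context {R : realType}.
Notation mu := (@lebesgue_measure R).
Local Open Scope ereal_scope.

Lemma int_sq (p c d : R) : (c < d)%R ->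
  \int[mu]_(x in `[c, d]) ((x - p) ^+ 2)%:E =
  ((((d - p) ^+ 3 - (c - p) ^+ 3) / 3)%R)%:E.
Proof.
move=> cd.
pose q : {poly R} := 3^-1 *: (('X - p%:P) * ('X - p%:P) * ('X - p%:P)).
have qE x : q.[x] = (3^-1 * (x - p) ^+ 3)%R.
  by rewrite /q !hornerE; ring.
rewrite (continuous_FTC2 (F := horner q) cd).
- by rewrite !qE -EFinB; congr (_%:E); ring.
- apply: continuous_subspaceT => x.
  have -> : (fun x => (x - p) ^+ 2)%R = horner (('X - p%:P) ^+ 2).
    by apply/funext => y; rewrite !hornerE.
  exact: continuous_horner.
- split.
  + by move=> x _; exact: derivable_horner.
  + exact/cvg_at_right_filter/continuous_horner.
  + exact/cvg_at_left_filter/continuous_horner.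
- move=> x _; rewrite derive1E (@derive_val _ _ _ _ _ _ _ (is_derive_poly q x)).
  rewrite /q !(derivZ, derivM, derivB, derivX, derivC) !hornerE; by field.
Qed.

Lemma int_split (f : R -> \bar R) (c d e : R) : (c <= d)%R -> (d <= e)%R ->
  measurable_fun setT f -> (forall x, 0 <= f x) ->
  \int[mu]_(x in `[c, e]) f x =
  \int[mu]_(x in `[c, d]) f x + \int[mu]_(x in `[d, e]) f x.
Proof.
move=> cd de mf f0.
rewrite (@itv_bndbnd_setU _ _ (BLeft c) (BRight d) (BRight e)); last 2 first.
- by rewrite bnd_simp.
- by rewrite bnd_simp.
rewrite ge0_integral_setU//=; last 2 first.
- exact: measurable_funTS.
- apply/disj_setPS => x [/=]; rewrite !in_itv/= => /andP[_ xd] /andP[dx _].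
  by move: (lt_le_trans dx xd); rewrite ltxx.
congr (_ + _); rewrite integral_itv_obnd_cbnd//.
exact: measurable_funTS.
Qed.

Lemma int_piece (f : R -> R) (p c d : R) : (c < d)%R ->
  (forall x, (c <= x <= d)%R -> f x = (x - p) ^+ 2)%R ->
  \int[mu]_(x in `[c, d]) (f x)%:E =
  ((((d - p) ^+ 3 - (c - p) ^+ 3) / 3)%R)%:E.
Proof.
move=> cd fE; rewrite -int_sq//; apply: eq_integral => x.
by rewrite inE /= in_itv /= => /fE ->.
Qed.

Lemma bigmin_seq_le (s : seq R) (F : R -> \bar R) p : p \in s ->
  \big[Order.min/+oo]_(q <- s) F q <= F p.
Proof.
elim: s => //= b s IH; rewrite in_cons big_cons => /orP[/eqP->|/IH H].
  by rewrite ge_min lexx.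
by rewrite ge_min H orbT.
Qed.

Lemma le_bigmin_seq (s : seq R) (F : R -> \bar R) c :
  (forall p, p \in s -> c <= F p) -> c <= \big[Order.min/+oo]_(q <- s) F q.
Proof.
elim: s => [|b s IH] H; first by rewrite big_nil leey.
rewrite big_cons le_min H ?mem_head //=; apply: IH => p ps.
by apply: H; rewrite in_cons ps orbT.
Qed.

Definition h (a x : R) : R :=
  (Num.min (Num.min ((x - a) ^+ 2) ((x - 4^-1) ^+ 2)) ((x - 2^-1) ^+ 2))%R.

Lemma sqdistE (S : {fset R}) a x :
  (forall p, (p \in S) = [|| p == a, p == 4^-1 | p == 2^-1]%R) ->
  sqdist S x = (h a x)%:E.
Proof.
move=> HS; apply/le_anti/andP; split.
  have H q : q \in S -> sqdist S x <= ((x - q) ^+ 2)%:E.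
    by move=> qS; apply: bigmin_seq_le.
  by rewrite /h !EFin_min !le_min !H // HS eqxx ?orbT.
apply: le_bigmin_seq => p; rewrite HS => /or3P[] /eqP ->; rewrite lee_fin /h.
- by rewrite !ge_min lexx.
- by rewrite !ge_min lexx !orbT.
- by rewrite !ge_min lexx !orbT.
Qed.

Lemma measurable_h a : measurable_fun setT (h a).
Proof.
apply: measurable_minr; first apply: measurable_minr.
all: by apply: measurable_funX; apply: measurable_funB.
Qed.

Lemma h_ge0 a x : (0 <= h a x)%R.
Proof. by rewrite /h !le_min !sqr_ge0. Qed.

Definition Dint a := \int[mu]_(x in `[0%R, 1%R]) (h a x)%:E.

Lemma distortionE (S : {fset R}) a :
  (forall p, (p \in S) = [|| p == a, p == 4^-1 | p == 2^-1]%R) ->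
  distortion (uniform_prob (@ltr01 R)) S = Dint a.
Proof.
move=> HS; rewrite /distortion.
under eq_integral => x _ do rewrite (sqdistE S a x HS).
rewrite integral_uniform //=.
- by rewrite subr0 invr1 mul1e.
- apply/measurable_EFinP. exact: (measurable_h a).
- by move=> x; rewrite lee_fin h_ge0.
Qed.

Lemma sq_le (b c x : R) : (0 <= (b - c) * (2 * x - b - c))%R ->
  ((x - b) ^+ 2 <= (x - c) ^+ 2)%R.
Proof.
move=> H; rewrite -subr_ge0.
by have -> : ((x - c) ^+ 2 - (x - b) ^+ 2 = (b - c) * (2 * x - b - c))%R by ring.
Qed.

Lemma prod_ge0 (u v : R) : ((0 <= u)%R /\ (0 <= v)%R) \/ ((u <= 0)%R /\ (v <= 0)%R) ->
  (0 <= u * v)%R.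
Proof. by case=> [[u0 v0]|[u0 v0]]; [exact: mulr_ge0|exact: mulr_le0]. Qed.

Lemma h1 a x : ((x - a) ^+ 2 <= (x - 4^-1) ^+ 2)%R -> ((x - a) ^+ 2 <= (x - 2^-1) ^+ 2)%R ->
  h a x = ((x - a) ^+ 2)%R.
Proof. by move=> H1 H2; rewrite /h (min_l H1) (min_l H2). Qed.

Lemma h2 a x : ((x - 4^-1) ^+ 2 <= (x - a) ^+ 2)%R -> ((x - 4^-1) ^+ 2 <= (x - 2^-1) ^+ 2)%R ->
  h a x = ((x - 4^-1) ^+ 2)%R.
Proof. by move=> H1 H2; rewrite /h (min_r H1) (min_l H2). Qed.

Lemma h3 a x : ((x - 2^-1) ^+ 2 <= (x - a) ^+ 2)%R -> ((x - 2^-1) ^+ 2 <= (x - 4^-1) ^+ 2)%R ->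
  h a x = ((x - 2^-1) ^+ 2)%R.
Proof. by move=> H1 H2; rewrite /h min_r // le_min H1 H2. Qed.

Lemma mhE a : measurable_fun setT (fun x => (h a x)%:E).
Proof. by apply/measurable_EFinP; exact: measurable_h. Qed.

Lemma Dint_far a : (a <= 2^-1 \/ 3 / 2 <= a)%R -> ((24^-1)%R)%:E <= Dint a.
Proof.
move=> Ha.
apply: (@le_trans _ _ (\int[mu]_(x in `[2^-1%R, 1%R]) (h a x)%:E)).
  rewrite (@int_piece _ 2^-1); [|lra|].
    by rewrite lee_fin le_eqVlt; apply/orP; left; apply/eqP; field.
  move=> x /andP[x1 x2]; apply: h3; apply: sq_le; apply: prod_ge0.
    by case: Ha => Ha; [left|right]; split; lra.
  by left; split; lra.
apply: ge0_subset_integral => //.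
- exact: measurable_funTS (mhE a).
- by move=> x _; rewrite lee_fin h_ge0.
- by apply: subset_itvr; rewrite bnd_simp; lra.
Qed.

Definition G (a : R) : R :=
  (((3 / 8 - 4^-1) ^+ 3 - (0 - 4^-1) ^+ 3) / 3 +
   ((((a + 2^-1) / 2) - 2^-1) ^+ 3 - (3 / 8 - 2^-1) ^+ 3) / 3 +
   ((1 - a) ^+ 3 - (((a + 2^-1) / 2) - a) ^+ 3) / 3)%R.

Lemma Dint_mid a : (2^-1 < a < 3 / 2)%R -> Dint a = (G a)%:E.
Proof.
move=> /andP[a1 a2].
have mh := mhE a.
have h0 x : 0 <= (h a x)%:E by rewrite lee_fin h_ge0.
rewrite /Dint (int_split _ 0%R (3 / 8)%R 1%R _ _ mh h0); [|lra|lra].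
rewrite (int_split _ (3 / 8)%R ((a + 2^-1) / 2)%R 1%R _ _ mh h0); [|lra|lra].
rewrite (@int_piece _ 4^-1); [|lra|]; last first.
  move=> x /andP[x1 x2]; apply: h2; apply: sq_le; apply: prod_ge0.
    by right; split; lra.
  by right; split; lra.
rewrite (@int_piece _ 2^-1 (3 / 8)%R); [|lra|]; last first.
  move=> x /andP[x1 x2]; apply: h3; apply: sq_le; apply: prod_ge0.
    by right; split; lra.
  by left; split; lra.
rewrite (@int_piece _ a); [|lra|]; last first.
  move=> x /andP[x1 x2]; apply: h1; apply: sq_le; apply: prod_ge0.
    by left; split; lra.
  by left; split; lra.
by rewrite -!EFinD /G addrA.
Qed.

Lemma G_ge a : (a < 3 / 2)%R -> (77 / 6912 <= G a)%R /\ (G a = 77 / 6912 -> a = 5 / 6)%R.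
Proof.
move=> a2.
have E : (G a - 77 / 6912 = 4^-1 * ((a - 5 / 6) ^+ 2 * (11 / 6 - a)))%R.
  by rewrite /G; field.
have p0 : (0 < 11 / 6 - a)%R by lra.
split.
  rewrite -subr_ge0 E; apply: mulr_ge0; first lra.
  by apply: mulr_ge0; [exact: sqr_ge0|lra].
move=> /eqP; rewrite -subr_eq0 E mulf_eq0 mulf_eq0 sqrf_eq0 subr_eq0.
case/or3P => [|/eqP//|]; first by move/eqP; lra.
by move/eqP; lra.
Qed.

Lemma Dbound a : ((77 / 6912)%R)%:E <= Dint a /\ (Dint a = ((77 / 6912)%R)%:E -> a = 5 / 6)%R.
Proof.
have [Hf|Hm] : (a <= 2^-1 \/ 3 / 2 <= a)%R \/ (2^-1 < a < 3 / 2)%R.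
  case: (leP a 2^-1%R) => ?; first by left; left.
  case: (leP (3 / 2)%R a) => ?; first by left; right.
  by right; apply/andP; split.
  have H := Dint_far a Hf.
  have lt : ((77 / 6912 : R)%R)%:E < ((24^-1 : R)%R)%:E by rewrite lte_fin; lra.
  split; first exact: ltW (lt_le_trans lt H).
  by move=> E; move: (lt_le_trans lt H); rewrite E ltxx.
rewrite Dint_mid //; move: Hm => /andP[_ a2]; have [G1 G2] := G_ge a a2.
by split; [rewrite lee_fin| move=> [E]; exact: G2 E].
Qed.

Lemma D56 : Dint (5 / 6)%R = ((77 / 6912)%R)%:E.
Proof. by rewrite Dint_mid; [rewrite /G; congr (_%:E); field | apply/andP; split; lra]. Qed.

Lemma P_pos (U : set R) (c d : R) : measurable U -> (0 <= c)%R -> (c < d)%R -> (d <= 1)%R ->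
  (`[c, d] `<=` U)%classic -> 0 < uniform_prob (@ltr01 R) U.
Proof.
move=> mU c0 cd d1 sub.
have : uniform_prob (@ltr01 R) `[c, d] <= uniform_prob (@ltr01 R) U.
  by apply: le_measure => //; rewrite inE.
apply: lt_le_trans.
rewrite /uniform_prob (eq_integral (fun _ => 1)); last first.
  move=> x; rewrite inE /= in_itv /= => /andP[xc xd].
  rewrite /uniform_pdf ifT ?subr0 ?invr1 //.
  by apply/andP; split; [exact: le_trans xc|exact: le_trans d1].
rewrite integral_cst //= mul1e lebesgue_measure_itv /= lte_fin cd.
by rewrite -EFinD lte_fin subr_gt0.
Qed.

Lemma abs_le (u v : R) : (`|u| <= `|v|)%R = (u ^+ 2 <= v ^+ 2)%R.
Proof.
rewrite -ler_sqr ?qualifE /= ?normr_ge0 //.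
by rewrite !real_normK ?num_real.
Qed.
End S.

Theorem proposition3p2 (R : realType) :
  let P := uniform_prob (@ltr01 R) in
  let beta : {fset R} := [fset 4^-1; 2^-1] in
  let alpha3 : {fset R} := [fset 4^-1; 2^-1; 5 / 6] in
  [/\ cond_optimal P beta 3 alpha3,
      (forall S, cond_optimal P beta 3 S -> S = alpha3) &
      condV P beta 3 = (77 / 6912 : R)%:E].
Proof.
move=> P beta alpha3; rewrite {}/P.
have hb : #|` beta| = 2%N.
  rewrite /beta cardfs2; case: eqP => // E; exfalso; move: E; lra.
have Hcard (alpha : {fset R}) : (#|` alpha| <= 3 - #|` beta|)%N ->
    alpha = fset0 \/ exists a, alpha = [fset a].
  rewrite hb; case E: #|` alpha| => [|[|n]] // _.
    by left; exact: cardfs0_eq.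
  by right; apply/cardfs1P; rewrite E.
have memb a p : (p \in [fset a] `|` beta) = [|| p == a, p == 4^-1 | p == 2^-1].
  by rewrite !inE.
have memb0 p : (p \in fset0 `|` beta) = [|| p == 4^-1, p == 4^-1 | p == 2^-1].
  by rewrite !inE /=; case: (p == 4^-1).
have memb3 p : (p \in alpha3) = [|| p == 5 / 6, p == 4^-1 | p == 2^-1].
  by rewrite !inE; case: (p == 5 / 6); case: (p == 4^-1); case: (p == 2^-1).
have key (alpha : {fset R}) : (#|` alpha| <= 3 - #|` beta|)%N ->
   ((77 / 6912 : R)%:E <= distortion (uniform_prob (@ltr01 R)) (alpha `|` beta))%E /\
   (distortion (uniform_prob (@ltr01 R)) (alpha `|` beta) = (77 / 6912 : R)%:E -> alpha `|` beta = alpha3).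
  case/Hcard => [->|[a ->]].
    rewrite (distortionE _ 4^-1 memb0); have [H1 H2] := Dbound (4^-1 : R).
    split; first exact: H1.
    by move=> /H2 E; exfalso; move: E; lra.
  rewrite (distortionE _ a (memb a)); have [H1 H2] := Dbound a.
  split; first exact: H1.
  move=> /H2 ->; apply/fsetP => p; rewrite memb3 memb.
  by case: (p == 5 / 6); case: (p == 4^-1); case: (p == 2^-1).
have HV : condV (uniform_prob (@ltr01 R)) beta 3 = (77 / 6912 : R)%:E.
  apply/le_anti/andP; split.
    rewrite -D56 -(distortionE _ (5 / 6) (memb (5 / 6))).
    apply: ereal_inf_lbound; exists [fset 5 / 6] => //=.
    by rewrite cardfs1 hb.
  apply: le_ereal_inf_tmp => _ [alpha Ha <-]; exact: (key alpha Ha).1.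
split => //.
- split; first by rewrite hb.
  exists [fset 5 / 6]; split.
  + by rewrite cardfs1 hb.
  + apply/fsetP => p; rewrite memb3 memb.
    by case: (p == 5 / 6); case: (p == 4^-1); case: (p == 2^-1).
  + by rewrite HV (distortionE _ (5 / 6) memb3) D56.
  + move=> b; rewrite !inE => /orP[]/eqP->.
    * have E1 : voronoi alpha3 4^-1 = `]-oo, (3 / 8)%R]%classic.
        apply/seteqP; split => x /=.
          move=> H; have M : (2^-1 : R) \in alpha3 by rewrite memb3 eqxx !orbT.
          have := H _ M.
          by rewrite abs_le in_itv /=; lra.
        rewrite in_itv /= => xle q; rewrite memb3 => /or3P[]/eqP->; rewrite abs_le; lra.
      rewrite E1; apply: (@P_pos R _ 0%R (3 / 8)%R); [exact: measurable_itv|lra|lra|lra|].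
      by move=> x; rewrite /= !in_itv /= => /andP[].
    * have E2 : voronoi alpha3 2^-1 = `[(3 / 8)%R, (2 / 3)%R]%classic.
        apply/seteqP; split => x /=.
          move=> H; have M : (4^-1 : R) \in alpha3 by rewrite memb3 eqxx !orbT.
          have M' : (5 / 6 : R) \in alpha3 by rewrite memb3 eqxx.
          have := H _ M.
          have := H _ M'.
          by rewrite !abs_le in_itv /= => ? ?; apply/andP; split; lra.
        rewrite in_itv /= => /andP[x1 x2] q; rewrite memb3 => /or3P[]/eqP->; rewrite abs_le; lra.
      rewrite E2; apply: (@P_pos R _ (3 / 8)%R (2 / 3)%R); [exact: measurable_itv|lra|lra|lra|].
      by [].
- move=> S [_ [alpha [Ha -> HD _]]]; apply: (key alpha Ha).2.
  by rewrite HD HV.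
Qed.
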